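(* Let $H=(H_p,\Delta,\epsilon,S,\pi)_{p\in G}$ be a crossed group-cograded weak Hopf quasigroup over a group $G$. Define its mirror $\widetilde H=(\widetilde H_p,\widetilde\Delta,\widetilde\epsilon,\widetilde S,\widetilde\pi)_{p\in G}$ as follows: (1) as an algebra, $\widetilde H_p=H_{p^{-1}}$ for every $p\in G$; (2) for $p,q\in G$ the comultiplication $\widetilde\Delta_{p,q}:\widetilde H_{pq}=H_{q^{-1}p^{-1}}\to \widetilde H_p\otimes\widetilde H_q=H_{p^{-1}}\otimes H_{q^{-1}}$ is $\widetilde\Delta_{p,q}=(\pi_q\otimes \mathrm{id}_{H_{q^{-1}}})\circ\Delta_{q^{-1}p^{-1}q,\,q^{-1}}$; (3) the counit is $\widetilde\epsilon=\epsilon:\widetilde H_e=H_e\to k$; (4) the antipode is $\widetilde S_p=\pi_p\circ S_{p^{-1}}:\widetilde H_p=H_{p^{-1}}\to H_p=\widetilde H_{p^{-1}}$; (5) the crossing is $\widetilde\pi_p=\pi_p$ (viewed as a map $\widetilde H_q=H_{q^{-1}}\to H_{pq^{-1}p^{-1}}=\widetilde H_{pqp^{-1}}$). Then $\widetilde H$ is again a crossed group-cograded weak Hopf quasigroup over $G$.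
   Context: Let $k$ be a field and $G$ a group with identity $e$. A group-cograded weak Hopf quasigroup $H$ over $G$ consists of a family $(H_p)_{p\in G}$ of unital, not necessarily associative, $k$-algebras with units $1_p$; $k$-linear maps $\Delta_{p,q}:H_{pq}\to H_p\otimes H_q$ ($p,q\in G$), written $\Delta_{p,q}(h)=h_{(1,p)}\otimes h_{(2,q)}$, which are coassociative, $(\Delta_{p,q}\otimes\mathrm{id})\Delta_{pq,r}=(\mathrm{id}\otimes\Delta_{q,r})\Delta_{p,qr}$ (iterated coproducts are written $h_{(1,p)}\otimes h_{(2,q)}\otimes h_{(3,r)}$, etc.); and a linear counit $\epsilon:H_e\to k$ with $(\epsilon\otimes\mathrm{id})\Delta_{e,p}=\mathrm{id}=(\mathrm{id}\otimes\epsilon)\Delta_{p,e}$; such that: (1) each $\Delta_{p,q}$ is multiplicative, and $(\Delta_{p,q}\otimes\mathrm{id})\Delta_{pq,r}(1_{pqr})=(\Delta_{p,q}(1_{pq})\otimes 1_r)(1_p\otimes\Delta_{q,r}(1_{qr}))=(1_p\otimes\Delta_{q,r}(1_{qr}))(\Delta_{p,q}(1_{pq})\otimes 1_r)$ for all $p,q,r$; (2) $\epsilon((gh)l)=\epsilon(g(hl))=\epsilon(gh_{(2,e)})\epsilon(h_{(1,e)}l)=\epsilon(gh_{(1,e)})\epsilon(h_{(2,e)}l)$ for $g,h,l\in H_e$; (3) writing $\Delta_{p,q}(1_{pq})=1_{(1,p)}\otimes 1_{(2,q)}$ and defining $\epsilon^t_p,\epsilon^s_p:H_e\to H_p$ by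 $\epsilon^t_p(h)=\epsilon(1_{(1,e)}h)1_{(2,p)}$ and $\epsilon^s_p(h)=1_{(1,p)}\epsilon(h1_{(2,e)})$, there is a family of linear maps $S_p:H_p\to H_{p^{-1}}$ (the antipode) with $S_p(h)=S_p(h_{(1,p)})\epsilon^t_{p^{-1}}(h_{(2,e)})=\epsilon^s_{p^{-1}}(h_{(1,e)})S_p(h_{(2,p)})$ for $h\in H_p$, and for all $h\in H_e$, $g\in H_p$: $S_{p^{-1}}(h_{(1,p^{-1})})(h_{(2,p)}g)=\epsilon^s_p(h)g$, $h_{(1,p)}(S_{p^{-1}}(h_{(2,p^{-1})})g)=\epsilon^t_p(h)g$, $(gh_{(1,p)})S_{p^{-1}}(h_{(2,p^{-1})})=g\epsilon^t_p(h)$, $(gS_{p^{-1}}(h_{(1,p^{-1})}))h_{(2,p)}=g\epsilon^s_p(h)$. It is crossed if it is equipped with a family of algebra isomorphisms $\pi_p:H_q\to H_{pqp^{-1}}$ ($p,q\in G$), the crossing, such that $(\pi_p\otimes\pi_p)\Delta_{q,r}=\Delta_{pqp^{-1},prp^{-1}}\pi_p$, $\epsilon\pi_p=\epsilon$ and $\pi_{pq}=\pi_p\pi_q$ for all $p,q,r\in G$. *)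

(* Defs.v *)
From HB Require Import structures.
From mathcomp Require Import all_boot all_algebra.
Set Implicit Arguments. Unset Strict Implicit. Unset Printing Implicit Defensive.
Import GRing.Theory.
Local Open Scope ring_scope.

Record grp := Grp {
  gcar :> Type;
  gmul : gcar -> gcar -> gcar;
  ginv : gcar -> gcar;
  gunit : gcar;
  gmulA : forall x y z, gmul x (gmul y z) = gmul (gmul x y) z;
  gmul1l : forall x, gmul gunit x = x;
  gmul1r : forall x, gmul x gunit = x;
  gmulVl : forall x, gmul (ginv x) x = gunit;
  gmulVr : forall x, gmul x (ginv x) = gunit }.
Arguments gmul {g}.
Arguments ginv {g}.
Arguments gunit {g}.

Section GroupFacts.
Variable G : grp.
Implicit Types p q r x y : G.

Definition gconj p q : G := gmul (gmul p q) (ginv p).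

Lemma ginv_uniq x y : gmul x y = gunit -> y = ginv x.
Proof.
move=> h; rewrite -[y]gmul1l -(gmulVl x) -gmulA h gmul1r //.
Qed.

Lemma ginvK x : ginv (ginv x) = x.
Proof. by symmetry; apply: ginv_uniq; apply: gmulVl. Qed.

Lemma ginv1 : ginv (gunit : G) = gunit.
Proof. by symmetry; apply: ginv_uniq; rewrite gmul1l. Qed.

Lemma ginvM x y : ginv (gmul x y) = gmul (ginv y) (ginv x).
Proof.
symmetry; apply: ginv_uniq.
by rewrite gmulA -(gmulA x) gmulVr gmul1r gmulVr.
Qed.

Lemma gconjM p q r : gconj p (gmul q r) = gmul (gconj p q) (gconj p r).
Proof.
rewrite /gconj !gmulA -(gmulA _ (ginv p) p) gmulVl gmul1r //.
Qed.

Lemma gconj1 p : gconj p gunit = gunit.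
Proof. by rewrite /gconj gmul1r gmulVr. Qed.

Lemma gconjMl p q r : gconj (gmul p q) r = gconj p (gconj q r).
Proof. by rewrite /gconj ginvM !gmulA. Qed.

Lemma gconjV p q : gconj p (ginv q) = ginv (gconj p q).
Proof. by rewrite /gconj !ginvM ginvK gmulA. Qed.

Definition mir_idx p q : G := gmul (gmul (ginv q) (ginv p)) q.

Lemma mir_dom p q : ginv (gmul p q) = gmul (mir_idx p q) (ginv q).
Proof. by rewrite /mir_idx ginvM -gmulA gmulVr gmul1r. Qed.

Lemma mir_conj p q : gconj q (mir_idx p q) = ginv p.
Proof.
by rewrite /gconj /mir_idx !gmulA gmulVr gmul1l -gmulA gmulVr gmul1r.
Qed.

Lemma mir_antip p : gconj p (ginv (ginv p)) = ginv (ginv p).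
Proof. by rewrite ginvK /gconj -gmulA gmulVr gmul1r. Qed.

End GroupFacts.

Section Tensors.
Variable k : fieldType.

Definition islin (U V : lmodType k) (f : U -> V) : Prop :=
  forall (a : k) (u v : U), f (a *: u + v) = a *: f u + f v.

Definition bilin (U V Z : lmodType k) (B : U -> V -> Z) : Prop :=
  (forall v, islin (fun u => B u v)) /\ (forall u, islin (B u)).

Definition trilin (U V W Z : lmodType k) (T : U -> V -> W -> Z) : Prop :=
  [/\ (forall v w, islin (fun u => T u v w)),
      (forall u w, islin (fun v => T u v w)) &
      (forall u v, islin (T u v))].

(* An element of U (x) V is represented by a finite formal sum
   sum_i u_i (x) v_i, i.e. a list of pairs; two lists represent the same
   tensor iff every bilinear map (into any k-vector space) takes the same
   value on them (universal property of the tensor product). *)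
Definition teq2 (U V : lmodType k) (s t : seq (U * V)) : Prop :=
  forall (Z : lmodType k) (B : U -> V -> Z), bilin B ->
    \sum_(x <- s) B x.1 x.2 = \sum_(x <- t) B x.1 x.2.

Definition teq3 (U V W : lmodType k) (s t : seq (U * V * W)) : Prop :=
  forall (Z : lmodType k) (T : U -> V -> W -> Z), trilin T ->
    \sum_(x <- s) T x.1.1 x.1.2 x.2 = \sum_(x <- t) T x.1.1 x.1.2 x.2.

End Tensors.

Definition castH (k : fieldType) (G : grp) (H : G -> lmodType k) (p q : G)
  (e : p = q) (x : H p) : H q := eq_rect p (fun r => (H r : Type)) x q e.

Section CGWHQ.
Local Unset Implicit Arguments.
Variables (k : fieldType) (G : grp) (H : G -> lmodType k).
Variable mul : forall p, H p -> H p -> H p.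
Variable one : forall p, H p.
Variable cop : forall p q : G, H (gmul p q) -> seq (H p * H q).
Variable eps : H gunit -> k.
Variable S : forall p : G, H p -> H (ginv p).
Variable pi : forall p q : G, H q -> H (gconj p q).

Local Notation e := (@gunit G).
Local Notation cH := (@castH _ _ H _ _).

Definition eps_t (p : G) (h : H e) : H p :=
  \sum_(x <- cop e p (one (gmul e p))) eps (mul e x.1 h) *: x.2.
Definition eps_s (p : G) (h : H e) : H p :=
  \sum_(x <- cop p e (one (gmul p e))) eps (mul e h x.2) *: x.1.

Definition cop_l (p q r : G) (h : H (gmul (gmul p q) r)) : seq (H p * H q * H r) :=
  flatten [seq [seq (y.1, y.2, x.2) | y <- cop p q x.1] | x <- cop (gmul p q) r h].
Definition cop_r (p q r : G) (h : H (gmul p (gmul q r))) : seq (H p * H q * H r) :=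
  flatten [seq [seq (x.1, y.1, y.2) | y <- cop q r x.2] | x <- cop p (gmul q r) h].

Definition tmul2 (p q : G) (s t : seq (H p * H q)) : seq (H p * H q) :=
  [seq (mul p x.1 y.1, mul q x.2 y.2) | x <- s, y <- t].
Definition tmul3 (p q r : G) (s t : seq (H p * H q * H r)) : seq (H p * H q * H r) :=
  [seq (mul p x.1.1 y.1.1, mul q x.1.2 y.1.2, mul r x.2 y.2) | x <- s, y <- t].
Definition tscale2 (p q : G) (a : k) (s : seq (H p * H q)) : seq (H p * H q) :=
  [seq (a *: x.1, x.2) | x <- s].

Record is_cgwhq : Prop := {
  (* each H_p is a unital (not necessarily associative) k-algebra *)
  mul_bilin : forall p, bilin (mul p);
  mul1x : forall p (x : H p), mul p (one p) x = x;
  mulx1 : forall p (x : H p), mul p x (one p) = x;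
  cop_lin : forall p q (a : k) (h h' : H (gmul p q)),
    teq2 (cop p q (a *: h + h')) (tscale2 p q a (cop p q h) ++ cop p q h');
  eps_lin : forall (a : k) (u v : H e), eps (a *: u + v) = a * eps u + eps v;
  S_lin : forall p, islin (S p);
  coassoc : forall p q r (h : H (gmul (gmul p q) r)),
    teq3 (cop_l p q r h) (cop_r p q r (cH (esym (gmulA p q r)) h));
  counit_l : forall p (h : H p),
    \sum_(x <- cop e p (cH (esym (gmul1l p)) h)) eps x.1 *: x.2 = h;
  counit_r : forall p (h : H p),
    \sum_(x <- cop p e (cH (esym (gmul1r p)) h)) eps x.2 *: x.1 = h;
  cop_mul : forall p q (a b : H (gmul p q)),
    teq2 (cop p q (mul (gmul p q) a b)) (tmul2 p q (cop p q a) (cop p q b));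
  cop_one1 : forall p q r,
    teq3 (cop_l p q r (one (gmul (gmul p q) r)))
         (tmul3 p q r [seq (x.1, x.2, one r) | x <- cop p q (one (gmul p q))]
                      [seq (one p, y.1, y.2) | y <- cop q r (one (gmul q r))]);
  cop_one2 : forall p q r,
    teq3 (cop_l p q r (one (gmul (gmul p q) r)))
         (tmul3 p q r [seq (one p, y.1, y.2) | y <- cop q r (one (gmul q r))]
                      [seq (x.1, x.2, one r) | x <- cop p q (one (gmul p q))]);
  eps_mul1 : forall g h l : H e,
    eps (mul e (mul e g h) l) = eps (mul e g (mul e h l));
  eps_mul2 : forall g h l : H e,
    eps (mul e (mul e g h) l) =
    \sum_(x <- cop e e (cH (esym (gmul1l e)) h))
       eps (mul e g x.2) * eps (mul e x.1 l);
  eps_mul3 : forall g h l : H e,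
    eps (mul e (mul e g h) l) =
    \sum_(x <- cop e e (cH (esym (gmul1l e)) h))
       eps (mul e g x.1) * eps (mul e x.2 l);
  S_epst : forall p (h : H p),
    S p h = \sum_(x <- cop p e (cH (esym (gmul1r p)) h))
              mul (ginv p) (S p x.1) (eps_t (ginv p) x.2);
  S_epss : forall p (h : H p),
    S p h = \sum_(x <- cop e p (cH (esym (gmul1l p)) h))
              mul (ginv p) (eps_s (ginv p) x.1) (S p x.2);
  S_ax1 : forall p (h : H e) (g : H p),
    \sum_(x <- cop (ginv p) p (cH (esym (gmulVl p)) h))
       mul p (cH (ginvK p) (S (ginv p) x.1)) (mul p x.2 g) = mul p (eps_s p h) g;
  S_ax2 : forall p (h : H e) (g : H p),
    \sum_(x <- cop p (ginv p) (cH (esym (gmulVr p)) h))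
       mul p x.1 (mul p (cH (ginvK p) (S (ginv p) x.2)) g) = mul p (eps_t p h) g;
  S_ax3 : forall p (h : H e) (g : H p),
    \sum_(x <- cop p (ginv p) (cH (esym (gmulVr p)) h))
       mul p (mul p g x.1) (cH (ginvK p) (S (ginv p) x.2)) = mul p g (eps_t p h);
  S_ax4 : forall p (h : H e) (g : H p),
    \sum_(x <- cop (ginv p) p (cH (esym (gmulVl p)) h))
       mul p (mul p g (cH (ginvK p) (S (ginv p) x.1))) x.2 = mul p g (eps_s p h);
  pi_lin : forall p q, islin (pi p q);
  pi_mul : forall p q (a b : H q),
    pi p q (mul q a b) = mul (gconj p q) (pi p q a) (pi p q b);
  pi_one : forall p q, pi p q (one q) = one (gconj p q);
  pi_bij : forall p q, bijective (pi p q);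
  pi_cop : forall p q r (h : H (gmul q r)),
    teq2 [seq (pi p q x.1, pi p r x.2) | x <- cop q r h]
         (cop (gconj p q) (gconj p r) (cH (gconjM p q r) (pi p (gmul q r) h)));
  pi_eps : forall p (h : H e), eps (cH (gconj1 p) (pi p e h)) = eps h;
  pi_comp : forall p q r (h : H r),
    cH (gconjMl p q r) (pi (gmul p q) r h) = pi p (gconj q r) (pi q r h)
}.

End CGWHQ.

Section Mirror.
Local Unset Implicit Arguments.
Variables (k : fieldType) (G : grp) (H : G -> lmodType k).
Variable mul : forall p, H p -> H p -> H p.
Variable one : forall p, H p.
Variable cop : forall p q : G, H (gmul p q) -> seq (H p * H q).
Variable eps : H gunit -> k.
Variable S : forall p : G, H p -> H (ginv p).
Variable pi : forall p q : G, H q -> H (gconj p q).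

Definition mirH : G -> lmodType k := fun p => H (ginv p).
Definition mir_mul (p : G) : mirH p -> mirH p -> mirH p := mul (ginv p).
Definition mir_one (p : G) : mirH p := one (ginv p).
Definition mir_cop (p q : G) (h : mirH (gmul p q)) : seq (mirH p * mirH q) :=
  [seq (@castH _ _ H _ _ (mir_conj p q) (pi q (mir_idx p q) x.1), x.2)
  | x <- cop (mir_idx p q) (ginv q) (@castH _ _ H _ _ (mir_dom p q) h)].
Definition mir_eps (h : mirH gunit) : k := eps (@castH _ _ H _ _ (ginv1 G) h).
Definition mir_S (p : G) (h : mirH p) : mirH (ginv p) :=
  @castH _ _ H _ _ (mir_antip p) (pi p (ginv (ginv p)) (S (ginv p) h)).
Definition mir_pi (p q : G) (h : mirH q) : mirH (gconj p q) :=
  @castH _ _ H _ _ (gconjV p q) (pi p (ginv q) h).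

End Mirror.

(* Main.v *)
Require Import Defs.
From mathcomp Require Import all_boot all_algebra.
From Stdlib Require Import ProofIrrelevance.
Set Implicit Arguments. Unset Strict Implicit. Unset Printing Implicit Defensive.
Import GRing.Theory.
Local Open Scope ring_scope.


Section GrpT.
Variable G : grp.
Lemma gmulKV (x y : G) : gmul (gmul x (ginv y)) y = x.
Proof. by rewrite -gmulA gmulVl gmul1r. Qed.
Lemma gmulVK (x y : G) : gmul (gmul x y) (ginv y) = x.
Proof. by rewrite -gmulA gmulVr gmul1r. Qed.
End GrpT.

Ltac gnorm := rewrite /mir_idx /gconj;
  rewrite ?ginvM ?ginvK ?ginv1 ?gmulA ?gmul1l ?gmul1r;
  repeat (rewrite ?gmulKV ?gmulVK ?gmulVr ?gmulVl ?gmul1l ?gmul1r ?gmulA ?ginvM ?ginvK ?ginv1).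
Ltac gsolve := (gnorm; reflexivity) || (apply: esym; gnorm; reflexivity) || (gnorm; done).

Section Lin.
Variable k : fieldType.
Implicit Types U V W Z : lmodType k.

Lemma linE U V (f : U -> V) : islin f -> forall a u v, f (a *: u + v) = a *: f u + f v.
Proof. by move=> hf; exact: hf. Qed.
Lemma mklin U V (f : U -> V) : (forall a u v, f (a *: u + v) = a *: f u + f v) -> islin f.
Proof. by move=> hf; exact: hf. Qed.

Lemma lin0 U V (f : U -> V) : islin f -> f 0 = 0.
Proof.
move=> /linE hf; have := hf 1 0 0; rewrite scale1r addr0 => h.
have := congr1 (fun z => z - f 0) h; rewrite /= addrK subrr => h2.
by move: h2; rewrite scale1r => <-.
Qed.
Lemma linZ U V (f : U -> V) : islin f -> forall a u, f (a *: u) = a *: f u.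
Proof. by move=> hf a u; rewrite -[a *: u]addr0 (linE hf) lin0 // addr0. Qed.
Lemma linD U V (f : U -> V) : islin f -> forall u v, f (u + v) = f u + f v.
Proof. by move=> hf u v; have := linE hf 1 u v; rewrite !scale1r. Qed.
Lemma lin_sum U V (f : U -> V) I (s : seq I) (F : I -> U) : islin f ->
  f (\sum_(i <- s) F i) = \sum_(i <- s) f (F i).
Proof.
move=> hf; elim: s => [|x s IH]; first by rewrite !big_nil lin0.
by rewrite !big_cons linD // IH.
Qed.
Lemma islin_comp U V W (f : V -> W) (g : U -> V) : islin f -> islin g -> islin (fun x => f (g x)).
Proof. by move=> hf hg; apply: mklin => a u v; rewrite (linE hg) (linE hf). Qed.
Lemma islin_id U : islin (fun x : U => x).
Proof. by apply: mklin. Qed.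
Lemma islin_scale U (x : U) : islin (fun a : k^o => a *: x).
Proof. by apply: mklin => a u v; rewrite scalerDl scalerA. Qed.
Lemma islin_sum U V I (s : seq I) (F : I -> U -> V) :
  (forall i, islin (F i)) -> islin (fun u => \sum_(i <- s) F i u).
Proof.
move=> hF; apply: mklin => a u v; rewrite scaler_sumr -big_split /=.
by apply: eq_bigr => i _; rewrite (linE (hF i)).
Qed.
Lemma islin_scalel U V (f : U -> k^o) (x : V) : islin f -> islin (fun u => f u *: x).
Proof. by move=> hf; apply: mklin => a u v; rewrite (linE hf) scalerDl scalerA. Qed.
Lemma islin_scaler U V (c : k) (f : U -> V) : islin f -> islin (fun u => c *: f u).
Proof. by move=> hf; apply: mklin => a u v; rewrite (linE hf) scalerDr !scalerA mulrC. Qed.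

Lemma bilin_comp U V U' V' Z (B : U -> V -> Z) (f : U' -> U) (g : V' -> V) :
  bilin B -> islin f -> islin g -> bilin (fun u v => B (f u) (g v)).
Proof.
move=> [h1 h2] hf hg; split=> [v|u]; apply: mklin => a x y /=.
  by rewrite (linE hf) (linE (h1 _)).
by rewrite (linE hg) (linE (h2 _)).
Qed.
Lemma bilin_lin U V Z' Z (B : U -> V -> Z') (f : Z' -> Z) :
  bilin B -> islin f -> bilin (fun u v => f (B u v)).
Proof.
move=> [h1 h2] hf; split=> [v|u]; apply: mklin => a x y /=.
  by rewrite (linE (h1 _)) (linE hf).
by rewrite (linE (h2 _)) (linE hf).
Qed.
Lemma trilin_comp U V W U' V' W' Z (T : U -> V -> W -> Z) (f : U' -> U) (g : V' -> V) (h : W' -> W):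
  trilin T -> islin f -> islin g -> islin h -> trilin (fun u v w => T (f u) (g v) (h w)).
Proof.
move=> [h1 h2 h3] hf hg hh; split=> [v w|u w|u v]; apply: mklin => a x y /=.
- by rewrite (linE hf) (linE (h1 _ _)).
- by rewrite (linE hg) (linE (h2 _ _)).
- by rewrite (linE hh) (linE (h3 _ _)).
Qed.
Lemma trilin_bilin U V W Z (T : U -> V -> W -> Z) w :
  trilin T -> bilin (fun u v => T u v w).
Proof. by move=> [h1 h2 h3]; split. Qed.
Lemma trilin_bilin1 U V W Z (T : U -> V -> W -> Z) u :
  trilin T -> bilin (T u).
Proof. by move=> [h1 h2 h3]; split. Qed.
Lemma bilin_mul_scale U V (f : U -> k^o) (g : V -> k^o) : islin f -> islin g ->
  bilin (fun u v => (f u * g v : k^o)).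
Proof.
move=> hf hg; split=> [v|u]; apply: mklin => a x y /=.
  by rewrite (linE hf) mulrDl -mulrA.
by rewrite (linE hg) mulrDr mulrCA.
Qed.

Lemma bilin_scale U V (f : U -> k^o) : islin f -> bilin (fun (u : U) (v : V) => f u *: v).
Proof.
move=> hf; split=> [v|u]; apply: mklin => a x y /=.
  by rewrite (linE hf) scalerDl scalerA.
by rewrite scalerDr !scalerA mulrC.
Qed.
Lemma bilin_scale2 U V (f : V -> k^o) : islin f -> bilin (fun (u : U) (v : V) => f v *: u).
Proof.
move=> hf; split=> [v|u]; apply: mklin => a x y /=.
  by rewrite scalerDr !scalerA mulrC.
by rewrite (linE hf) scalerDl scalerA.
Qed.

Lemma teq2_refl U V (s : seq (U * V)) : teq2 s s. Proof. by []. Qed.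
Lemma teq2_sym U V (s t : seq (U * V)) : teq2 s t -> teq2 t s.
Proof. by move=> h Z B hB; rewrite h. Qed.
Lemma teq2_trans U V (s t u : seq (U * V)) : teq2 s t -> teq2 t u -> teq2 s u.
Proof. by move=> h1 h2 Z B hB; rewrite h1 // h2. Qed.
Lemma teq3_sym U V W (s t : seq (U * V * W)) : teq3 s t -> teq3 t s.
Proof. by move=> h Z B hB; rewrite h. Qed.
Lemma teq3_trans U V W (s t u : seq (U * V * W)) : teq3 s t -> teq3 t u -> teq3 s u.
Proof. by move=> h1 h2 Z B hB; rewrite h1 // h2. Qed.

End Lin.



Lemma sum_cop_lG (k : fieldType) (G : grp) (K : G -> lmodType k)
  (c : forall p q : G, K (gmul p q) -> seq (K p * K q)) (Z : nmodType) p q r h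
  (F : K p * K q * K r -> Z) :
  \sum_(x <- cop_l k G K c p q r h) F x =
  \sum_(x <- c (gmul p q) r h) \sum_(z <- c p q x.1) F (z.1, z.2, x.2).
Proof.
rewrite /cop_l big_flatten big_map; apply: eq_bigr => x _.
by rewrite big_map.
Qed.
Lemma sum_cop_rG (k : fieldType) (G : grp) (K : G -> lmodType k)
  (c : forall p q : G, K (gmul p q) -> seq (K p * K q)) (Z : nmodType) p q r h
  (F : K p * K q * K r -> Z) :
  \sum_(x <- cop_r k G K c p q r h) F x =
  \sum_(x <- c p (gmul q r) h) \sum_(z <- c q r x.2) F (x.1, z.1, z.2).
Proof.
rewrite /cop_r big_flatten big_map; apply: eq_bigr => x _.
by rewrite big_map.
Qed.

Section Main.
Local Unset Implicit Arguments.
Variables (k : fieldType) (G : grp) (H : G -> lmodType k)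
 (mul : forall p, H p -> H p -> H p) (one : forall p, H p)
 (cop : forall p q : G, H (gmul p q) -> seq (H p * H q))
 (eps : H gunit -> k) (S : forall p : G, H p -> H (ginv p))
 (pi : forall p q : G, H q -> H (gconj p q)).
Hypothesis X : is_cgwhq k G H mul one cop eps S pi.
Let Xmul_bilin := @Defs.mul_bilin _ _ _ _ _ _ _ _ _ X.
Let Xmul1x := @Defs.mul1x _ _ _ _ _ _ _ _ _ X.
Let Xmulx1 := @Defs.mulx1 _ _ _ _ _ _ _ _ _ X.
Let Xcop_lin := @Defs.cop_lin _ _ _ _ _ _ _ _ _ X.
Let Xeps_lin := @Defs.eps_lin _ _ _ _ _ _ _ _ _ X.
Let XS_lin := @Defs.S_lin _ _ _ _ _ _ _ _ _ X.
Let Xcoassoc := @Defs.coassoc _ _ _ _ _ _ _ _ _ X.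
Let Xcounit_l := @Defs.counit_l _ _ _ _ _ _ _ _ _ X.
Let Xcounit_r := @Defs.counit_r _ _ _ _ _ _ _ _ _ X.
Let Xcop_mul := @Defs.cop_mul _ _ _ _ _ _ _ _ _ X.
Let Xcop_one1 := @Defs.cop_one1 _ _ _ _ _ _ _ _ _ X.
Let Xcop_one2 := @Defs.cop_one2 _ _ _ _ _ _ _ _ _ X.
Let Xeps_mul1 := @Defs.eps_mul1 _ _ _ _ _ _ _ _ _ X.
Let Xeps_mul2 := @Defs.eps_mul2 _ _ _ _ _ _ _ _ _ X.
Let Xeps_mul3 := @Defs.eps_mul3 _ _ _ _ _ _ _ _ _ X.
Let XS_epst := @Defs.S_epst _ _ _ _ _ _ _ _ _ X.
Let XS_epss := @Defs.S_epss _ _ _ _ _ _ _ _ _ X.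
Let XS_ax1 := @Defs.S_ax1 _ _ _ _ _ _ _ _ _ X.
Let XS_ax2 := @Defs.S_ax2 _ _ _ _ _ _ _ _ _ X.
Let XS_ax3 := @Defs.S_ax3 _ _ _ _ _ _ _ _ _ X.
Let XS_ax4 := @Defs.S_ax4 _ _ _ _ _ _ _ _ _ X.
Let Xpi_lin := @Defs.pi_lin _ _ _ _ _ _ _ _ _ X.
Let Xpi_mul := @Defs.pi_mul _ _ _ _ _ _ _ _ _ X.
Let Xpi_one := @Defs.pi_one _ _ _ _ _ _ _ _ _ X.
Let Xpi_bij := @Defs.pi_bij _ _ _ _ _ _ _ _ _ X.
Let Xpi_cop := @Defs.pi_cop _ _ _ _ _ _ _ _ _ X.
Let Xpi_eps := @Defs.pi_eps _ _ _ _ _ _ _ _ _ X.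
Let Xpi_comp := @Defs.pi_comp _ _ _ _ _ _ _ _ _ X.

Local Set Implicit Arguments.
Local Notation cH := (@castH k G H _ _).
Local Notation e := (@gunit G).

Lemma cH_id p (E : p = p) x : cH E x = x.
Proof. by rewrite (proof_irrelevance _ E erefl). Qed.
Lemma cH_comp p q r (E1 : p = q) (E2 : q = r) x : cH E2 (cH E1 x) = cH (etrans E1 E2) x.
Proof. by subst r. Qed.
Lemma cH_irr p q (E E' : p = q) x : cH E x = cH E' x.
Proof. by rewrite (proof_irrelevance _ E E'). Qed.
Lemma cH_K p q (E : p = q) (E' : q = p) x : cH E' (cH E x) = x.
Proof. by rewrite cH_comp cH_id. Qed.
Lemma cH_lin p q (E : p = q) : islin (cH E).
Proof. by subst q; apply: mklin. Qed.
Lemma cH_mul p q (E : p = q) a b : cH E (mul p a b) = mul q (cH E a) (cH E b).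
Proof. by subst q. Qed.
Lemma cH_one p q (E : p = q) : cH E (one p) = one q.
Proof. by subst q. Qed.
Lemma cH_move p q (E : p = q) x y : x = cH (esym E) y -> cH E x = y.
Proof. by move=> ->; rewrite cH_K. Qed.
Lemma cH_inj p q (E : p = q) x y : cH E x = cH E y -> x = y.
Proof. by subst q. Qed.
Lemma cH_eq p q r (E1 : p = r) (E2 : q = r) (E3 : p = q) x y : cH E3 x = y -> cH E1 x = cH E2 y.
Proof. by subst q r; rewrite !cH_id. Qed.

Definition piE p q r (E : gconj p q = r) (h : H q) : H r := cH E (pi p q h).
Definition copE a b c (E : c = gmul a b) (h : H c) := cop a b (cH E h).
Definition epsE a (E : a = e) (h : H a) := eps (cH E h).
Definition SE p q (E : ginv p = q) (h : H p) : H q := cH E (S p h).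

Lemma piE_lin p q r E : islin (@piE p q r E).
Proof. by apply: mklin => a u v; rewrite /piE (linE (Xpi_lin p q)) (linE (cH_lin E)). Qed.
Lemma piE_mul p q r E a b : @piE p q r E (mul q a b) = mul r (piE E a) (piE E b).
Proof. by rewrite /piE Xpi_mul cH_mul. Qed.
Lemma piE_one p q r E : @piE p q r E (one q) = one r.
Proof. by rewrite /piE Xpi_one cH_one. Qed.
Lemma piE_irr p q r E E' h : @piE p q r E h = @piE p q r E' h.
Proof. exact: cH_irr. Qed.
Lemma piE_cast_in p q q' r (ee : q = q') E h :
  @piE p q' r E (cH ee h) = @piE p q r (etrans (f_equal (gconj p) ee) E) h.
Proof. by subst q'; rewrite cH_id; apply: piE_irr. Qed.
Lemma cH_piE p q r r' (ee : r = r') E h : cH ee (@piE p q r E h) = @piE p q r' (etrans E ee) h.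
Proof. by rewrite /piE cH_comp. Qed.
Lemma piE_p p p' q r (ep : p = p') E E' h : @piE p q r E h = @piE p' q r E' h.
Proof. by subst p'; apply: piE_irr. Qed.
Lemma piE_comp p p' pp q q' r (ep : pp = gmul p p') E1 E2 E h :
  @piE p q' r E (@piE p' q q' E1 h) = @piE pp q r E2 h.
Proof.
subst pp q'; rewrite /piE cH_id -(Xpi_comp p p' q h) cH_comp; apply: cH_irr.
Qed.
Lemma piE_bij p q r E : bijective (@piE p q r E).
Proof.
subst r; rewrite /piE.
have [g h1 h2] := Xpi_bij p q.
by exists g => x; rewrite cH_id ?h1 ?h2.
Qed.

Lemma pi_p_cast p p' (ep : p = p') q z (E : gconj p q = gconj p' q) :
  pi p' q z = cH E (pi p q z).
Proof. by subst p'; rewrite cH_id. Qed.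

Lemma pi_ee r (y : H (gconj e r)) (E : gconj e r = gconj e (gconj e r)) :
  pi e (gconj e r) y = cH E y.
Proof.
have [g h1 h2] := Xpi_bij e r.
rewrite -(h2 y).
have := Xpi_comp e e r (g y).
rewrite (pi_p_cast (esym (gmul1l e)) _ (f_equal (fun z => gconj z r) (esym (gmul1l e)))).
rewrite cH_comp => <-.
by apply: cH_irr.
Qed.

Lemma pi_e q (h : H q) (E : q = gconj e q) : pi e q h = cH E h.
Proof.
have E0 : gconj e q = gconj e (gconj e q) by rewrite /gconj ginv1 !gmul1r !gmul1l.
have := pi_ee (cH E h) E0.
have -> : pi e (gconj e q) (cH E h) = piE (erefl _) (cH E h) by [].
rewrite (@piE_cast_in e q (gconj e q) _ E) /piE => h3.
apply: (cH_inj (E := etrans (f_equal (gconj e) E) erefl)); rewrite h3 !cH_comp; apply: cH_irr.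
Qed.

Lemma piE_e p q r E (ep : p = e) (E' : q = r) h : @piE p q r E h = cH E' h.
Proof.
subst p r; rewrite /piE.
have E1 : q = gconj e q by rewrite /gconj ginv1 gmul1r gmul1l.
by rewrite (pi_e h E1) cH_comp; apply: cH_irr.
Qed.

Lemma piE_inv p p' q q' r E1 E2 (ep : gmul p' p = e) (E' : q = r) h :
  @piE p' q' r E2 (@piE p q q' E1 h) = cH E' h.
Proof.
have E3 : gconj (gmul p' p) q = r by rewrite ep /gconj ginv1 gmul1r gmul1l.
rewrite (@piE_comp p' p (gmul p' p) q q' r erefl E1 E3).
exact: piE_e.
Qed.


Lemma copE_irr a b c E E' h : @copE a b c E h = @copE a b c E' h.
Proof. by rewrite /copE (cH_irr E E'). Qed.
Lemma copE_cast_in a b c c' (ee : c = c') E h : @copE a b c' E (cH ee h) = @copE a b c (etrans ee E) h.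
Proof. by rewrite /copE cH_comp. Qed.
Lemma copE_map a a' b b' c (ea : a = a') (eb : b = b') E E' h :
  map (fun x => (cH ea x.1, cH eb x.2)) (@copE a b c E h) = @copE a' b' c E' h.
Proof.
subst a' b'; rewrite (copE_irr E E') -[RHS]map_id; apply: eq_map => -[x y] /=.
by rewrite ?cH_id.
Qed.
Lemma copE_sum_out (Z : nmodType) a a' b b' c (ea : a = a') (eb : b = b') E E' h
  (F : H a' * H b' -> Z) :
  \sum_(x <- @copE a' b' c E' h) F x =
  \sum_(x <- @copE a b c E h) F (cH ea x.1, cH eb x.2).
Proof. by rewrite -(copE_map ea eb E E') big_map. Qed.

Lemma copE_linB a b c E (Z : lmodType k) (B : H a -> H b -> Z) : bilin B ->
  islin (fun u => \sum_(x <- @copE a b c E u) B x.1 x.2).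
Proof.
move=> hB; apply: mklin => al u v.
rewrite /copE (linD (cH_lin E)) (linZ (cH_lin E)).
rewrite (Xcop_lin a b al (cH E u) (cH E v) Z B hB) big_cat /= big_map /=.
rewrite scaler_sumr; congr (_ + _); apply: eq_bigr => x _.
by case: hB => h1 h2; rewrite (linZ (h1 _)).
Qed.

Lemma pi_copG p q r c (E : c = gmul q r) a b d (Ea : gconj p q = a) (Eb : gconj p r = b)
  (Ed : gconj p c = d) (E' : d = gmul a b) h (Z : lmodType k) (B : H a -> H b -> Z) :
  bilin B ->
  \sum_(x <- @copE q r c E h) B (piE Ea x.1) (piE Eb x.2) =
  \sum_(x <- @copE a b d E' (piE Ed h)) B x.1 x.2.
Proof.
move=> hB; subst a b d c.
rewrite /piE /copE !cH_id.
have := Xpi_cop p q r h Z B hB; rewrite big_map /= => ->.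
by rewrite (cH_irr E' (gconjM p q r)).
Qed.

Lemma counit_lG a b c (E : c = gmul a b) (ea : a = e) (eb : c = b) h :
  \sum_(x <- @copE a b c E h) epsE ea x.1 *: x.2 = cH eb h.
Proof.
subst a c; rewrite /copE /epsE cH_id.
have := Xcounit_l b (cH eb h); rewrite cH_K => <-.
by apply: eq_bigr => x _; rewrite cH_id.
Qed.

Lemma counit_rG a b c (E : c = gmul a b) (eb : b = e) (ea : c = a) h :
  \sum_(x <- @copE a b c E h) epsE eb x.2 *: x.1 = cH ea h.
Proof.
subst b c; rewrite /copE /epsE cH_id.
have := Xcounit_r a (cH ea h); rewrite cH_K => <-.
by apply: eq_bigr => x _; rewrite cH_id.
Qed.

Lemma epsE_irr a E E' h : @epsE a E h = @epsE a E' h.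
Proof. by rewrite /epsE (cH_irr E E'). Qed.
Lemma epsE_cast_in a a' (ee : a = a') E h : @epsE a' E (cH ee h) = @epsE a (etrans ee E) h.
Proof. by rewrite /epsE cH_comp. Qed.
Lemma epsE_lin a E : islin (fun h => (@epsE a E h : k^o)).
Proof.
apply: mklin => al u v; rewrite /epsE (linD (cH_lin E)) (linZ (cH_lin E)).
exact: (Xeps_lin al (cH E u) (cH E v)).
Qed.
Lemma pi_epsG p q r (E : r = e) E1 (E' : q = e) h : @epsE r E (@piE p q r E1 h) = @epsE q E' h.
Proof.
subst r q; rewrite /epsE /piE !cH_id -(Xpi_eps p h); congr eps; apply: cH_irr.
Qed.

Lemma sum_cop_l (Z : nmodType) p q r h (F : H p -> H q -> H r -> Z) :
  \sum_(x <- cop_l k G H cop p q r h) F x.1.1 x.1.2 x.2 =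
  \sum_(x <- cop (gmul p q) r h) \sum_(z <- cop p q x.1) F z.1 z.2 x.2.
Proof.
rewrite /cop_l big_flatten big_map; apply: eq_bigr => x _.
by rewrite big_map.
Qed.
Lemma sum_cop_r (Z : nmodType) p q r h (F : H p -> H q -> H r -> Z) :
  \sum_(x <- cop_r k G H cop p q r h) F x.1.1 x.1.2 x.2 =
  \sum_(x <- cop p (gmul q r) h) \sum_(z <- cop q r x.2) F x.1 z.1 z.2.
Proof.
rewrite /cop_r big_flatten big_map; apply: eq_bigr => x _.
by rewrite big_map.
Qed.

Lemma coassocG a b c A B D (eA : A = gmul a b) (eB : B = gmul b c) (E1 : D = gmul A c)
  (E2 : D = gmul a B) h (Z : lmodType k) (T : H a -> H b -> H c -> Z) : trilin T ->
  \sum_(x <- @copE A c D E1 h) \sum_(z <- @copE a b A eA x.1) T z.1 z.2 x.2 =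
  \sum_(x <- @copE a B D E2 h) \sum_(z <- @copE b c B eB x.2) T x.1 z.1 z.2.
Proof.
move=> hT; subst A B D; rewrite /copE.
have := Xcoassoc a b c h Z T hT; rewrite sum_cop_l sum_cop_r /= => ->.
by rewrite (cH_irr E2 (esym (gmulA a b c))).
Qed.

Lemma cop_mulG a b c E u v (Z : lmodType k) (B : H a -> H b -> Z) : bilin B ->
  \sum_(x <- @copE a b c E (mul c u v)) B x.1 x.2 =
  \sum_(x <- @copE a b c E u) \sum_(y <- @copE a b c E v) B (mul a x.1 y.1) (mul b x.2 y.2).
Proof.
move=> hB; subst c; rewrite /copE /=.
have := Xcop_mul a b u v Z B hB; rewrite /tmul2 => ->.
by rewrite big_allpairs_dep.
Qed.

Lemma cop_one1G a b c A B D (eA : A = gmul a b) (eB : B = gmul b c) (E1 : D = gmul A c)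
  (Z : lmodType k) (T : H a -> H b -> H c -> Z) : trilin T ->
  \sum_(x <- @copE A c D E1 (one D)) \sum_(z <- @copE a b A eA x.1) T z.1 z.2 x.2 =
  \sum_(x <- @copE a b A eA (one A)) \sum_(y <- @copE b c B eB (one B)) T x.1 (mul b x.2 y.1) y.2.
Proof.
move=> hT; subst A B D; rewrite /copE /=.
have := Xcop_one1 a b c Z T hT; rewrite sum_cop_l /= => ->.
rewrite /tmul3 big_allpairs_dep /=.
rewrite big_map; apply: eq_bigr => x _; rewrite big_map; apply: eq_bigr => y _ /=.
by rewrite Xmulx1 Xmul1x.
Qed.

Lemma cop_one2G a b c A B D (eA : A = gmul a b) (eB : B = gmul b c) (E1 : D = gmul A c)
  (Z : lmodType k) (T : H a -> H b -> H c -> Z) : trilin T ->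
  \sum_(x <- @copE A c D E1 (one D)) \sum_(z <- @copE a b A eA x.1) T z.1 z.2 x.2 =
  \sum_(y <- @copE b c B eB (one B)) \sum_(x <- @copE a b A eA (one A)) T x.1 (mul b y.1 x.2) y.2.
Proof.
move=> hT; subst A B D; rewrite /copE /=.
have := Xcop_one2 a b c Z T hT; rewrite sum_cop_l /= => ->.
rewrite /tmul3 big_allpairs_dep /=.
rewrite big_map; apply: eq_bigr => x _; rewrite big_map; apply: eq_bigr => y _ /=.
by rewrite Xmulx1 Xmul1x.
Qed.

Lemma eps_mul2G a b (E : e = gmul a b) (ea : a = e) (eb : b = e) g h l :
  eps (mul e (mul e g h) l) =
  \sum_(x <- @copE a b e E h) eps (mul e g (cH eb x.2)) * eps (mul e (cH ea x.1) l).
Proof.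
subst a b; rewrite Xeps_mul2 /copE /=.
by rewrite (cH_irr E (esym (gmul1l e))); apply: eq_bigr => x _; rewrite ?cH_id.
Qed.
Lemma eps_mul3G a b (E : e = gmul a b) (ea : a = e) (eb : b = e) g h l :
  eps (mul e (mul e g h) l) =
  \sum_(x <- @copE a b e E h) eps (mul e g (cH ea x.1)) * eps (mul e (cH eb x.2) l).
Proof.
subst a b; rewrite Xeps_mul3 /copE /=.
by rewrite (cH_irr E (esym (gmul1l e))); apply: eq_bigr => x _; rewrite ?cH_id.
Qed.

Lemma eps_tG p a b c (E : c = gmul a b) (ea : a = e) (eb : b = p) h :
  \sum_(x <- @copE a b c E (one c)) eps (mul e (cH ea x.1) h) *: cH eb x.2 =
  eps_t k G H mul one cop eps p h.
Proof.
subst a p c; rewrite /copE /eps_t /=.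
by apply: eq_bigr => x _; rewrite ?cH_id.
Qed.
Lemma eps_sG p a b c (E : c = gmul a b) (ea : a = p) (eb : b = e) h :
  \sum_(x <- @copE a b c E (one c)) eps (mul e h (cH eb x.2)) *: cH ea x.1 =
  eps_s k G H mul one cop eps p h.
Proof.
subst b p c; rewrite /copE /eps_s /=.
by apply: eq_bigr => x _; rewrite ?cH_id.
Qed.

Lemma piE_comp_eq p p' s s' q q' q'' r E E1 E' E1' h :
  gmul p p' = gmul s s' ->
  @piE p q' r E (@piE p' q q' E1 h) = @piE s q'' r E' (@piE s' q q'' E1' h).
Proof.
move=> hs.
have E2 : gconj (gmul p p') q = r by rewrite gconjMl E1 E.
rewrite (piE_comp (erefl _) E1 E2) (piE_comp hs E1' E2).
done.
Qed.

Lemma pi_eps_t p q r (E : gconj p q = r) (Ee : gconj p e = e) z :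
  piE E (eps_t k G H mul one cop eps q z) = eps_t k G H mul one cop eps r (piE Ee z).
Proof.
rewrite /eps_t (lin_sum _ _ (piE_lin E)).
have hf : islin (fun u => (eps (mul e u (piE Ee z)) : k^o)).
  apply: mklin => a u v; case: (Xmul_bilin e) => h1 _.
  by rewrite (linE (h1 _)) Xeps_lin.
have hB := @bilin_scale _ _ (H r) _ hf.
have Ed : gconj p (gmul e q) = gmul e r by rewrite gconjM Ee E.
transitivity (\sum_(x <- @copE e q (gmul e q) (erefl _) (one (gmul e q)))
   eps (mul e (piE Ee x.1) (piE Ee z)) *: piE E x.2).
  apply: eq_bigr => x _; rewrite (linZ (piE_lin E)); congr (_ *: _).
  rewrite -piE_mul; exact: (esym (pi_epsG (erefl e) Ee (erefl e) _)).
by rewrite (pi_copG (erefl _) Ee E Ed (erefl _) _ hB) piE_one.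
Qed.

Lemma pi_eps_s p q r (E : gconj p q = r) (Ee : gconj p e = e) z :
  piE E (eps_s k G H mul one cop eps q z) = eps_s k G H mul one cop eps r (piE Ee z).
Proof.
rewrite /eps_s (lin_sum _ _ (piE_lin E)).
have hf : islin (fun v => (eps (mul e (piE Ee z) v) : k^o)).
  apply: mklin => a u v; case: (Xmul_bilin e) => _ h2.
  by rewrite (linE (h2 _)) Xeps_lin.
have hB := @bilin_scale2 _ (H r) _ _ hf.
have Ed : gconj p (gmul q e) = gmul r e by rewrite gconjM Ee E.
transitivity (\sum_(x <- @copE q e (gmul q e) (erefl _) (one (gmul q e)))
   eps (mul e (piE Ee z) (piE Ee x.2)) *: piE E x.1).
  apply: eq_bigr => x _; rewrite (linZ (piE_lin E)); congr (_ *: _).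
  rewrite -piE_mul; exact: (esym (pi_epsG (erefl e) Ee (erefl e) _)).
by rewrite (pi_copG (erefl _) E Ee Ed (erefl _) _ hB) piE_one.
Qed.

Ltac pirr := repeat match goal with
 | |- context[@castH k G H ?p ?q ?E1 ?x] =>
   match goal with |- context[@castH k G H p q ?E2 x] =>
     tryif constr_eq E1 E2 then fail else rewrite (@cH_irr p q E1 E2 x) end
 | |- context[@piE ?p ?q ?r ?E1 ?x] =>
   match goal with |- context[@piE p q r ?E2 x] =>
     tryif constr_eq E1 E2 then fail else rewrite (@piE_irr p q r E1 E2 x) end
 | |- context[@copE ?a ?b ?c ?E1 ?x] =>
   match goal with |- context[@copE a b c ?E2 x] =>
     tryif constr_eq E1 E2 then fail else rewrite (@copE_irr a b c E1 E2 x) end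
 | |- context[@epsE ?a ?E1 ?x] =>
   match goal with |- context[@epsE a ?E2 x] =>
     tryif constr_eq E1 E2 then fail else rewrite (@epsE_irr a E1 E2 x) end
 end.

Local Notation tH := (mirH k G H).
Local Notation tmul := (mir_mul k G H mul).
Local Notation tone := (mir_one k G H one).
Local Notation tcop := (mir_cop k G H cop pi).
Local Notation teps := (mir_eps k G H eps).
Local Notation tS := (mir_S k G H S pi).
Local Notation tpi := (mir_pi k G H pi).
Local Notation mcast := (@castH k G tH _ _).

Lemma mcH p q (E : p = q) (x : tH p) : mcast E x = cH (f_equal ginv E) x.
Proof. by subst q. Qed.

Lemma sum_tcop (Z : nmodType) p q h (F : H (ginv p) * H (ginv q) -> Z) :
  \sum_(x <- tcop p q h) F x =
  \sum_(x <- @copE _ _ _ (mir_dom p q) h) F (piE (mir_conj p q) x.1, x.2).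
Proof. by rewrite /mir_cop big_map. Qed.

Lemma m_mul_bilin p : bilin (tmul p). Proof. exact: Xmul_bilin. Qed.
Lemma m_mul1x p (x : tH p) : tmul p (tone p) x = x. Proof. exact: Xmul1x. Qed.
Lemma m_mulx1 p (x : tH p) : tmul p x (tone p) = x. Proof. exact: Xmulx1. Qed.

Lemma m_cop_lin p q (a : k) (h h' : tH (gmul p q)) :
  teq2 (tcop p q (a *: h + h')) (tscale2 k G tH p q a (tcop p q h) ++ tcop p q h').
Proof.
move=> Z B hB.
have hB' : bilin (fun u v => B (piE (mir_conj p q) u) v).
  by apply: bilin_comp; [exact: hB | apply: piE_lin | apply: islin_id].
rewrite big_cat /tscale2 big_map /= !sum_tcop.
rewrite (linE (copE_linB (mir_dom p q) hB')) /=; congr (_ + _).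
rewrite big_map sum_tcop; rewrite scaler_sumr; apply: eq_bigr => x _.
by case: hB => h1 _; rewrite (linZ (h1 _)).
Qed.

Lemma m_eps_lin (a : k) (u v : tH gunit) : teps (a *: u + v) = a * teps u + teps v.
Proof. exact: (linE (epsE_lin (ginv1 G))). Qed.

Lemma m_S_lin p : islin (tS p).
Proof.
apply: mklin => a u v; rewrite /mir_S.
by rewrite (linE (XS_lin _)) (linE (Xpi_lin _ _)) (linE (cH_lin _)).
Qed.

Lemma m_pi_lin p q : islin (tpi p q).
Proof. exact: (piE_lin (gconjV p q)). Qed.
Lemma m_pi_mul p q (a b : tH q) : tpi p q (tmul q a b) = tmul (gconj p q) (tpi p q a) (tpi p q b).
Proof. exact: piE_mul. Qed.
Lemma m_pi_one p q : tpi p q (tone q) = tone (gconj p q).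
Proof. exact: piE_one. Qed.
Lemma m_pi_bij p q : bijective (tpi p q).
Proof. exact: piE_bij. Qed.
Lemma m_pi_eps p (h : tH gunit) : teps (mcast (gconj1 p) (tpi p gunit h)) = teps h.
Proof.
rewrite /mir_eps mcH cH_comp /mir_pi cH_comp.
exact: (pi_epsG (erefl (@gunit G)) _ (ginv1 G) h).
Qed.
Lemma m_pi_comp p q r (h : tH r) :
  mcast (gconjMl p q r) (tpi (gmul p q) r h) = tpi p (gconj q r) (tpi q r h).
Proof.
rewrite mcH /mir_pi.
have -> : cH (gconjV q r) (pi q (ginv r) h) = piE (gconjV q r) h by [].
have -> : cH (gconjV p (gconj q r)) (pi p (ginv (gconj q r)) (piE (gconjV q r) h)) =
   piE (gconjV p (gconj q r)) (piE (gconjV q r) h) by [].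
rewrite (piE_comp erefl _ (etrans (gconjV (gmul p q) r) (f_equal ginv (gconjMl p q r)))).
rewrite /piE cH_comp; apply: cH_irr.
Qed.
Lemma m_eps_mul1 (g h l : tH gunit) :
  teps (tmul gunit (tmul gunit g h) l) = teps (tmul gunit g (tmul gunit h l)).
Proof. by rewrite /mir_eps /mir_mul !cH_mul Xeps_mul1. Qed.

Lemma m_counit_l p (h : tH p) :
  \sum_(x <- tcop gunit p (mcast (esym (gmul1l p)) h)) teps x.1 *: x.2 = h.
Proof.
rewrite mcH sum_tcop copE_cast_in.
have Ei : mir_idx gunit p = gunit by gsolve.
match goal with |- context[@copE ?a ?b ?c ?E0 h] =>
  transitivity (\sum_(x <- @copE a b c E0 h) epsE Ei x.1 *: x.2); last exact: (counit_lG E0 Ei (erefl _) h) end.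
apply: eq_bigr => x _ /=.
congr (_ *: _); exact: pi_epsG.
Qed.

Lemma m_counit_r p (h : tH p) :
  \sum_(x <- tcop p gunit (mcast (esym (gmul1r p)) h)) teps x.2 *: x.1 = h.
Proof.
rewrite mcH sum_tcop copE_cast_in.
have Ei : ginv p = mir_idx p gunit by gsolve.
have E1 : ginv (@gunit G) = gunit by apply: ginv1.
rewrite /mir_eps.
have -> : forall E0, \sum_(x <- @copE (mir_idx p gunit) (ginv gunit) (ginv p) E0 h)
    eps (cH (ginv1 G) x.2) *: piE (mir_conj p gunit) x.1 =
    piE (mir_conj p gunit) (\sum_(x <- @copE (mir_idx p gunit) (ginv gunit) (ginv p) E0 h)
    epsE E1 x.2 *: x.1).
  move=> E0; rewrite (lin_sum _ _ (piE_lin _)); apply: eq_bigr => x _.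
  by rewrite (linZ (piE_lin _)) (epsE_irr _ (ginv1 G)).
rewrite counit_rG (piE_e _ (erefl _) (esym Ei)) cH_comp.
by rewrite cH_id.
Qed.

Lemma m_eps_mul2 (g h l : tH gunit) :
  teps (tmul gunit (tmul gunit g h) l) =
  \sum_(x <- tcop gunit gunit (mcast (esym (gmul1l gunit)) h))
     teps (tmul gunit g x.2) * teps (tmul gunit x.1 l).
Proof.
rewrite /mir_eps /mir_mul !cH_mul.
have ea : mir_idx (@gunit G) gunit = gunit by gsolve.
have eb : ginv (@gunit G) = gunit by apply: ginv1.
have E : (@gunit G) = gmul (mir_idx gunit gunit) (ginv gunit) by gsolve.
rewrite (eps_mul2G E ea eb) copE_cast_in mcH sum_tcop copE_cast_in.
match goal with |- _ = \sum_(x <- @copE ?a ?b ?c ?E0 h) _ => rewrite (copE_irr _ E0) end.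
apply: eq_bigr => x _ /=.
rewrite (piE_e _ (erefl _) (etrans ea (esym eb))).
rewrite !cH_mul !cH_comp.
by pirr.
Qed.

Lemma m_eps_mul3 (g h l : tH gunit) :
  teps (tmul gunit (tmul gunit g h) l) =
  \sum_(x <- tcop gunit gunit (mcast (esym (gmul1l gunit)) h))
     teps (tmul gunit g x.1) * teps (tmul gunit x.2 l).
Proof.
rewrite /mir_eps /mir_mul !cH_mul.
have ea : mir_idx (@gunit G) gunit = gunit by gsolve.
have eb : ginv (@gunit G) = gunit by apply: ginv1.
have E : (@gunit G) = gmul (mir_idx gunit gunit) (ginv gunit) by gsolve.
rewrite (eps_mul3G E ea eb) copE_cast_in mcH sum_tcop copE_cast_in.
match goal with |- _ = \sum_(x <- @copE ?a ?b ?c ?E0 h) _ => rewrite (copE_irr _ E0) end.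
apply: eq_bigr => x _ /=.
rewrite (piE_e _ (erefl _) (etrans ea (esym eb))).
rewrite !cH_mul !cH_comp.
by pirr.
Qed.

Lemma m_cop_mul p q (a b : tH (gmul p q)) :
  teq2 (tcop p q (tmul (gmul p q) a b)) (tmul2 k G tH tmul p q (tcop p q a) (tcop p q b)).
Proof.
move=> Z B hB.
have hB' : bilin (fun u v => B (piE (mir_conj p q) u) v).
  by apply: bilin_comp; [exact: hB | apply: piE_lin | apply: islin_id].
rewrite /tmul2 big_allpairs_dep sum_tcop /=.
rewrite /mir_mul (cop_mulG _ _ _ hB') sum_tcop.
apply: eq_bigr => x _; rewrite sum_tcop; apply: eq_bigr => y _ /=.
by rewrite piE_mul.
Qed.

Lemma m_pi_cop p q r (h : tH (gmul q r)) :
  teq2 [seq (tpi p q x.1, tpi p r x.2) | x <- tcop q r h]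
       (tcop (gconj p q) (gconj p r) (mcast (gconjM p q r) (tpi p (gmul q r) h))).
Proof.
move=> Z B hB.
have hB' : bilin (fun u v => B (piE (mir_conj (gconj p q) (gconj p r)) u) v).
  by apply: bilin_comp; [exact: hB | apply: piE_lin | apply: islin_id].
rewrite big_map sum_tcop sum_tcop mcH /mir_pi.
have -> : cH (f_equal ginv (gconjM p q r)) (cH (gconjV p (gmul q r)) (pi p (ginv (gmul q r)) h)) =
  piE (etrans (gconjV p (gmul q r)) (f_equal ginv (gconjM p q r))) h by rewrite /piE cH_comp.
have Ea : gconj p (mir_idx q r) = mir_idx (gconj p q) (gconj p r) by gsolve.
have Eb : gconj p (ginv r) = ginv (gconj p r) by gsolve.
rewrite -(pi_copG (mir_dom q r) Ea Eb _ _ _ hB') /=.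
apply: eq_bigr => x _ /=.
have -> : cH (gconjV p q) (pi p (ginv q) (piE (mir_conj q r) x.1)) =
  piE (gconjV p q) (piE (mir_conj q r) x.1) by [].
have -> : cH (gconjV p r) (pi p (ginv r) x.2) = piE (gconjV p r) x.2 by [].
congr (B _ _); last by pirr.
by apply: piE_comp_eq; gsolve.
Qed.

Lemma m_coassoc p q r (h : tH (gmul (gmul p q) r)) :
  teq3 (cop_l k G tH tcop p q r h) (cop_r k G tH tcop p q r (mcast (esym (gmulA p q r)) h)).
Proof.
move=> Z T hT.
rewrite sum_cop_lG sum_cop_rG /= !sum_tcop.
have EA : mir_idx (gmul p q) r = gmul (mir_idx p (gmul q r)) (mir_idx q r) by gsolve.
have Ea : gconj r (mir_idx p (gmul q r)) = mir_idx p q by gsolve.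
have Eb : gconj r (mir_idx q r) = ginv q by gsolve.
pose T' := fun u v w => T (piE (mir_conj p q) (piE Ea u)) (piE Eb v) w.
have l1 : islin (fun u => piE (mir_conj p q) (piE Ea u)).
  by apply: mklin => a u v; rewrite (linE (piE_lin _)) (linE (piE_lin _)).
have hT' : trilin T' by exact: (trilin_comp hT l1 (piE_lin Eb) (@islin_id _ _)).
transitivity (\sum_(x <- @copE _ _ _ (mir_dom (gmul p q) r) h)
   \sum_(z <- @copE _ _ _ EA x.1) T' z.1 z.2 x.2).
  apply: eq_bigr => x _ /=; rewrite sum_tcop /=.
  have hB : bilin (fun u v => T (piE (mir_conj p q) u) v x.2).
    exact: (bilin_comp (@trilin_bilin _ _ _ _ _ _ x.2 hT) (piE_lin _) (@islin_id _ _)).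
  by rewrite -(pi_copG EA Ea Eb (mir_conj (gmul p q) r) (mir_dom p q) x.1 hB).
rewrite (coassocG _ (mir_dom q r) _ (etrans (f_equal ginv (esym (gmulA p q r))) (mir_dom p (gmul q r))) h hT').
rewrite mcH copE_cast_in.
apply: eq_bigr => x _; rewrite sum_tcop; apply: eq_bigr => z _ /=.
rewrite /T'; congr (T _ _ _); last by pirr.
by rewrite (piE_comp (erefl _) Ea (mir_conj p (gmul q r))).
Qed.

Lemma m_copl p q r h (Z : lmodType k) (T : tH p -> tH q -> tH r -> Z) (hT : trilin T)
  (EA : mir_idx (gmul p q) r = gmul (mir_idx p (gmul q r)) (mir_idx q r))
  (Ea : gconj r (mir_idx p (gmul q r)) = mir_idx p q)
  (Eb : gconj r (mir_idx q r) = ginv q) :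
  \sum_(x <- cop_l k G tH tcop p q r h) T x.1.1 x.1.2 x.2 =
  \sum_(x <- @copE _ _ _ (mir_dom (gmul p q) r) h)
   \sum_(z <- @copE _ _ _ EA x.1) T (piE (mir_conj p q) (piE Ea z.1)) (piE Eb z.2) x.2.
Proof.
rewrite sum_cop_lG /= sum_tcop.
apply: eq_bigr => x _ /=; rewrite sum_tcop /=.
have hB : bilin (fun u v => T (piE (mir_conj p q) u) v x.2).
  exact: (bilin_comp (@trilin_bilin _ _ _ _ _ _ x.2 hT) (piE_lin _) (@islin_id _ _)).
by rewrite -(pi_copG EA Ea Eb (mir_conj (gmul p q) r) (mir_dom p q) x.1 hB).
Qed.

Lemma m_cop_one1 p q r :
  teq3 (cop_l k G tH tcop p q r (tone (gmul (gmul p q) r)))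
       (tmul3 k G tH tmul p q r [seq (x.1, x.2, tone r) | x <- tcop p q (tone (gmul p q))]
                    [seq (tone p, y.1, y.2) | y <- tcop q r (tone (gmul q r))]).
Proof.
move=> Z T hT.
have EA : mir_idx (gmul p q) r = gmul (mir_idx p (gmul q r)) (mir_idx q r) by gsolve.
have Ea : gconj r (mir_idx p (gmul q r)) = mir_idx p q by gsolve.
have Eb : gconj r (mir_idx q r) = ginv q by gsolve.
rewrite (m_copl _ hT EA Ea Eb).
have l1 : islin (fun u => piE (mir_conj p q) (piE Ea u)).
  by apply: mklin => a u v; rewrite (linE (piE_lin _)) (linE (piE_lin _)).
pose T' := fun u v w => T (piE (mir_conj p q) (piE Ea u)) (piE Eb v) w.
have hT' : trilin T' by exact: (trilin_comp hT l1 (piE_lin Eb) (@islin_id _ _)).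
rewrite (cop_one1G _ (mir_dom q r) _ hT').
rewrite /tmul3 big_allpairs_dep /= big_map.
pose B'' := fun u v => \sum_(y <- @copE _ _ _ (mir_dom q r) (one (ginv (gmul q r))))
   T (piE (mir_conj p q) u) (mul (ginv q) v (piE (mir_conj q r) y.1)) y.2.
have hB'' : bilin B''.
  split=> [v|u]; apply: islin_sum => y.
    exact: (islin_comp (proj1 (@trilin_bilin _ _ _ _ _ _ y.2 hT) _) (piE_lin _)).
  have hm : islin (fun v => mul (ginv q) v (piE (mir_conj q r) y.1)) by case: (Xmul_bilin (ginv q)).
  exact: (islin_comp (proj2 (@trilin_bilin _ _ _ _ _ _ y.2 hT) _) hm).
transitivity (\sum_(x <- @copE _ _ _ EA (one (mir_idx (gmul p q) r))) B'' (piE Ea x.1) (piE Eb x.2)).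
  apply: eq_bigr => x _; rewrite /B'' /T' /=.
  apply: eq_bigr => y _; rewrite piE_mul; congr (T _ (mul _ _ _) _); by pirr.
rewrite (pi_copG EA Ea Eb (mir_conj (gmul p q) r) (mir_dom p q) _ hB'') piE_one.
rewrite sum_tcop; apply: eq_bigr => x _; rewrite big_map sum_tcop /B''.
by apply: eq_bigr => y _ /=; rewrite /mir_mul /mir_one Xmulx1 Xmul1x.
Qed.

Lemma m_cop_one2 p q r :
  teq3 (cop_l k G tH tcop p q r (tone (gmul (gmul p q) r)))
       (tmul3 k G tH tmul p q r [seq (tone p, y.1, y.2) | y <- tcop q r (tone (gmul q r))]
                    [seq (x.1, x.2, tone r) | x <- tcop p q (tone (gmul p q))]).
Proof.
move=> Z T hT.
have EA : mir_idx (gmul p q) r = gmul (mir_idx p (gmul q r)) (mir_idx q r) by gsolve.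
have Ea : gconj r (mir_idx p (gmul q r)) = mir_idx p q by gsolve.
have Eb : gconj r (mir_idx q r) = ginv q by gsolve.
rewrite (m_copl _ hT EA Ea Eb).
have l1 : islin (fun u => piE (mir_conj p q) (piE Ea u)).
  by apply: mklin => a u v; rewrite (linE (piE_lin _)) (linE (piE_lin _)).
pose T' := fun u v w => T (piE (mir_conj p q) (piE Ea u)) (piE Eb v) w.
have hT' : trilin T' by exact: (trilin_comp hT l1 (piE_lin Eb) (@islin_id _ _)).
rewrite (cop_one2G _ (mir_dom q r) _ hT').
rewrite /tmul3 big_allpairs_dep /= big_map sum_tcop.
apply: eq_bigr => y _ /=.
pose B'' := fun u v => T (piE (mir_conj p q) u) (mul (ginv q) (piE (mir_conj q r) y.1) v) y.2.
have hB'' : bilin B''.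
  split=> [v|u].
    exact: (islin_comp (proj1 (@trilin_bilin _ _ _ _ _ _ y.2 hT) _) (piE_lin _)).
  have hm : islin (fun v => mul (ginv q) (piE (mir_conj q r) y.1) v) by case: (Xmul_bilin (ginv q)).
  exact: (islin_comp (proj2 (@trilin_bilin _ _ _ _ _ _ y.2 hT) _) hm).
transitivity (\sum_(x <- @copE _ _ _ EA (one (mir_idx (gmul p q) r))) B'' (piE Ea x.1) (piE Eb x.2)).
  apply: eq_bigr => x _; rewrite /B'' /T' /=.
  rewrite piE_mul; congr (T _ (mul _ _ _) _); by pirr.
rewrite (pi_copG EA Ea Eb (mir_conj (gmul p q) r) (mir_dom p q) _ hB'') piE_one.
rewrite big_map sum_tcop /B''.
by apply: eq_bigr => x _ /=; rewrite /mir_mul /mir_one Xmulx1 Xmul1x.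
Qed.

Lemma m_eps_s p (h : tH gunit) :
  eps_s k G tH tmul tone tcop teps p h = eps_s k G H mul one cop eps (ginv p) (cH (ginv1 G) h).
Proof.
have ea : mir_idx p gunit = ginv p by gsolve.
have eb : ginv (@gunit G) = gunit by apply: ginv1.
rewrite -(eps_sG (mir_dom p gunit) ea eb) {1}/eps_s sum_tcop.
apply: eq_bigr => y _ /=.
rewrite (piE_e _ (erefl _) ea) /mir_eps /mir_mul cH_mul.
by pirr.
Qed.

Lemma m_eps_t p (h : tH gunit) (Ep : gconj (ginv p) gunit = gunit) :
  eps_t k G tH tmul tone tcop teps p h =
  eps_t k G H mul one cop eps (ginv p) (piE Ep (cH (ginv1 G) h)).
Proof.
have EA : mir_idx gunit p = gunit by gsolve.
have Ew : gconj (ginv p) gunit = mir_idx gunit p by gsolve.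
rewrite -(eps_tG (mir_dom gunit p) EA (erefl (ginv p))) {1}/eps_t sum_tcop.
apply: eq_bigr => y _ /=; congr (_ *: _).
rewrite /mir_eps /mir_mul cH_mul cH_piE.
set h0 := cH (ginv1 G) h.
set E2 := etrans (mir_conj gunit p) (ginv1 G).
have hw : piE E2 (piE Ew h0) = h0 by rewrite (piE_inv _ _ (gmulVr p) (erefl _)).
rewrite -{1}hw -piE_mul.
have hp := pi_epsG (erefl gunit) E2 EA (mul _ y.1 (piE Ew h0)).
change (eps (piE E2 (mul _ y.1 (piE Ew h0))) = eps (cH EA (mul _ y.1 (piE Ew h0)))) in hp.
rewrite hp cH_mul cH_piE.
by pirr.
Qed.

Lemma m_S_epst p (h : tH p) :
  tS p h = \sum_(x <- tcop p gunit (mcast (esym (gmul1r p)) h))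
              tmul (ginv p) (tS p x.1) (eps_t k G tH tmul tone tcop teps (ginv p) x.2).
Proof.
have -> : tS p h = piE (mir_antip p) (S (ginv p) h) by [].
rewrite {1}(XS_epst (ginv p) h).
have -> : cop (ginv p) gunit (cH (esym (gmul1r (ginv p))) h) = copE (esym (gmul1r (ginv p))) h by [].
have ea : mir_idx p gunit = ginv p by gsolve.
have eb : ginv (@gunit G) = gunit by apply: ginv1.
rewrite (lin_sum _ _ (piE_lin _)) sum_tcop mcH copE_cast_in.
rewrite (copE_sum_out ea eb (etrans (f_equal ginv (esym (gmul1r p))) (mir_dom p gunit))).
apply: eq_bigr => y _ /=.
have Ep : gconj (ginv (ginv p)) gunit = gunit by gsolve.
rewrite (m_eps_t _ Ep) piE_mul (pi_eps_t _ (gconj1 p)).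
have -> : tS p (piE (mir_conj p gunit) y.1) = piE (mir_antip p) (S (ginv p) (piE (mir_conj p gunit) y.1)) by [].
rewrite (piE_e _ (erefl _) ea) !piE_cast_in.
rewrite /mir_mul; congr (mul _ _ (eps_t _ _ _ _ _ _ _ _ _)).
by apply: piE_p; gsolve.
Qed.

Lemma m_S_epss p (h : tH p) :
  tS p h = \sum_(x <- tcop gunit p (mcast (esym (gmul1l p)) h))
              tmul (ginv p) (eps_s k G tH tmul tone tcop teps (ginv p) x.1) (tS p x.2).
Proof.
have -> : tS p h = piE (mir_antip p) (S (ginv p) h) by [].
rewrite {1}(XS_epss (ginv p) h).
have -> : cop gunit (ginv p) (cH (esym (gmul1l (ginv p))) h) = copE (esym (gmul1l (ginv p))) h by [].
have ea : mir_idx gunit p = gunit by gsolve.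
rewrite (lin_sum _ _ (piE_lin _)) sum_tcop mcH copE_cast_in.
rewrite (copE_sum_out ea (erefl (ginv p)) (etrans (f_equal ginv (esym (gmul1l p))) (mir_dom gunit p))).
apply: eq_bigr => y _ /=.
rewrite m_eps_s piE_mul (pi_eps_s _ (gconj1 p)) /mir_mul.
rewrite cH_piE piE_cast_in.
by pirr.
Qed.

Lemma m_S_ax2 p (h : tH gunit) (g : tH p) :
  \sum_(x <- tcop p (ginv p) (mcast (esym (gmulVr p)) h))
     tmul p x.1 (tmul p (mcast (ginvK p) (tS (ginv p) x.2)) g) =
  tmul p (eps_t k G tH tmul tone tcop teps p h) g.
Proof.
have Ei : gconj (ginv p) (ginv p) = ginv p by gsolve.
have Ep : gconj p (ginv p) = ginv p by gsolve.
have Ee : gconj (ginv p) gunit = gunit by gsolve.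
have ea : mir_idx p (ginv p) = ginv p by gsolve.
rewrite (m_eps_t _ Ee) -(pi_eps_t Ei Ee).
transitivity (piE Ei (mul (ginv p) (eps_t k G H mul one cop eps (ginv p) (cH (ginv1 G) h)) (piE Ep g))); last first.
  by rewrite piE_mul (piE_inv _ _ (gmulVl p) (erefl _)).
rewrite -XS_ax2 (lin_sum _ _ (piE_lin _)).
have -> : cop (ginv p) (ginv (ginv p)) (cH (esym (gmulVr (ginv p))) (cH (ginv1 G) h)) =
   copE (esym (gmulVr (ginv p))) (cH (ginv1 G) h) by [].
rewrite copE_cast_in sum_tcop mcH copE_cast_in.
rewrite (copE_sum_out ea (erefl _) (etrans (f_equal ginv (esym (gmulVr p))) (mir_dom p (ginv p)))).
apply: eq_bigr => y _ /=.
rewrite !piE_mul (piE_inv _ _ (gmulVl p) (erefl _)) /mir_mul mcH.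
have -> : tS (ginv p) y.2 = piE (mir_antip (ginv p)) (S (ginv (ginv p)) y.2) by [].
rewrite !piE_cast_in cH_piE.
by pirr.
Qed.

Lemma m_S_ax3 p (h : tH gunit) (g : tH p) :
  \sum_(x <- tcop p (ginv p) (mcast (esym (gmulVr p)) h))
     tmul p (tmul p g x.1) (mcast (ginvK p) (tS (ginv p) x.2)) =
  tmul p g (eps_t k G tH tmul tone tcop teps p h).
Proof.
have Ei : gconj (ginv p) (ginv p) = ginv p by gsolve.
have Ep : gconj p (ginv p) = ginv p by gsolve.
have Ee : gconj (ginv p) gunit = gunit by gsolve.
have ea : mir_idx p (ginv p) = ginv p by gsolve.
rewrite (m_eps_t _ Ee) -(pi_eps_t Ei Ee).
transitivity (piE Ei (mul (ginv p) (piE Ep g) (eps_t k G H mul one cop eps (ginv p) (cH (ginv1 G) h)))); last first.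
  by rewrite piE_mul (piE_inv _ _ (gmulVl p) (erefl _)).
rewrite -XS_ax3 (lin_sum _ _ (piE_lin _)).
have -> : cop (ginv p) (ginv (ginv p)) (cH (esym (gmulVr (ginv p))) (cH (ginv1 G) h)) =
   copE (esym (gmulVr (ginv p))) (cH (ginv1 G) h) by [].
rewrite copE_cast_in sum_tcop mcH copE_cast_in.
rewrite (copE_sum_out ea (erefl _) (etrans (f_equal ginv (esym (gmulVr p))) (mir_dom p (ginv p)))).
apply: eq_bigr => y _ /=.
rewrite !piE_mul (piE_inv _ _ (gmulVl p) (erefl _)) /mir_mul mcH.
have -> : tS (ginv p) y.2 = piE (mir_antip (ginv p)) (S (ginv (ginv p)) y.2) by [].
rewrite !piE_cast_in cH_piE.
by pirr.
Qed.

Lemma m_S_ax1 p (h : tH gunit) (g : tH p) :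
  \sum_(x <- tcop (ginv p) p (mcast (esym (gmulVl p)) h))
     tmul p (mcast (ginvK p) (tS (ginv p) x.1)) (tmul p x.2 g) =
  tmul p (eps_s k G tH tmul tone tcop teps p h) g.
Proof.
have Ei : gconj (ginv p) (ginv p) = ginv p by gsolve.
have Ep : gconj p (ginv p) = ginv p by gsolve.
have Ee : gconj (ginv p) gunit = gunit by gsolve.
have Ed : gconj p (ginv gunit) = gunit by gsolve.
rewrite m_eps_s /mir_mul.
have -> : eps_s k G H mul one cop eps (ginv p) (cH (ginv1 G) h) =
    piE Ei (eps_s k G H mul one cop eps (ginv p) (piE Ed h)).
  by rewrite (pi_eps_s Ei Ee) (piE_inv _ _ (gmulVl p) (ginv1 G)).
transitivity (piE Ei (mul (ginv p) (eps_s k G H mul one cop eps (ginv p) (piE Ed h)) (piE Ep g))); last first.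
  by rewrite piE_mul (piE_inv _ _ (gmulVl p) (erefl _)).
rewrite -XS_ax1 (lin_sum _ _ (piE_lin _)).
pose B := fun u v => piE Ei (mul (ginv p) (cH (ginvK (ginv p)) (S (ginv (ginv p)) u))
                          (mul (ginv p) v (piE Ep g))).
have hB : bilin B.
  case: (Xmul_bilin (ginv p)) => m1 m2.
  split=> [v|u]; apply: mklin => a x y; rewrite /B.
    by rewrite (linE (XS_lin _)) (linE (cH_lin _)) (linE (m1 _)) (linE (piE_lin _)).
  by rewrite (linE (m1 _)) (linE (m2 _)) (linE (piE_lin _)).
transitivity (\sum_(x <- @copE _ _ _ (esym (gmulVl (ginv p))) (piE Ed h)) B x.1 x.2) => //.
rewrite -(pi_copG (etrans (f_equal ginv (esym (gmulVl p))) (mir_dom (ginv p) p))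
            (mir_conj (ginv p) p) Ep Ed (esym (gmulVl (ginv p))) h hB).
rewrite sum_tcop mcH copE_cast_in.
apply: eq_bigr => y _ /=; rewrite /B.
rewrite !piE_mul (piE_inv _ _ (gmulVl p) (erefl _)) (piE_inv _ _ (gmulVl p) (erefl _)) mcH.
have -> : tS (ginv p) (piE (mir_conj (ginv p) p) y.1) =
  piE (mir_antip (ginv p)) (S (ginv (ginv p)) (piE (mir_conj (ginv p) p) y.1)) by [].
rewrite !piE_cast_in cH_piE.
by pirr.
Qed.

Lemma m_S_ax4 p (h : tH gunit) (g : tH p) :
  \sum_(x <- tcop (ginv p) p (mcast (esym (gmulVl p)) h))
     tmul p (tmul p g (mcast (ginvK p) (tS (ginv p) x.1))) x.2 =
  tmul p g (eps_s k G tH tmul tone tcop teps p h).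
Proof.
have Ei : gconj (ginv p) (ginv p) = ginv p by gsolve.
have Ep : gconj p (ginv p) = ginv p by gsolve.
have Ee : gconj (ginv p) gunit = gunit by gsolve.
have Ed : gconj p (ginv gunit) = gunit by gsolve.
rewrite m_eps_s /mir_mul.
have -> : eps_s k G H mul one cop eps (ginv p) (cH (ginv1 G) h) =
    piE Ei (eps_s k G H mul one cop eps (ginv p) (piE Ed h)).
  by rewrite (pi_eps_s Ei Ee) (piE_inv _ _ (gmulVl p) (ginv1 G)).
transitivity (piE Ei (mul (ginv p) (piE Ep g) (eps_s k G H mul one cop eps (ginv p) (piE Ed h)))); last first.
  by rewrite piE_mul (piE_inv _ _ (gmulVl p) (erefl _)).
rewrite -XS_ax4 (lin_sum _ _ (piE_lin _)).
pose B := fun u v => piE Ei (mul (ginv p) (mul (ginv p) (piE Ep g) (cH (ginvK (ginv p)) (S (ginv (ginv p)) u))) v).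
have hB : bilin B.
  case: (Xmul_bilin (ginv p)) => m1 m2.
  split=> [v|u]; apply: mklin => a x y; rewrite /B.
    by rewrite (linE (XS_lin _)) (linE (cH_lin _)) (linE (m2 _)) (linE (m1 _)) (linE (piE_lin _)).
  by rewrite (linE (m2 _)) (linE (piE_lin _)).
transitivity (\sum_(x <- @copE _ _ _ (esym (gmulVl (ginv p))) (piE Ed h)) B x.1 x.2) => //.
rewrite -(pi_copG (etrans (f_equal ginv (esym (gmulVl p))) (mir_dom (ginv p) p))
            (mir_conj (ginv p) p) Ep Ed (esym (gmulVl (ginv p))) h hB).
rewrite sum_tcop mcH copE_cast_in.
apply: eq_bigr => y _ /=; rewrite /B.
rewrite !piE_mul (piE_inv _ _ (gmulVl p) (erefl _)) (piE_inv _ _ (gmulVl p) (erefl _)) mcH.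
have -> : tS (ginv p) (piE (mir_conj (ginv p) p) y.1) =
  piE (mir_antip (ginv p)) (S (ginv (ginv p)) (piE (mir_conj (ginv p) p) y.1)) by [].
rewrite !piE_cast_in cH_piE.
by pirr.
Qed.

Lemma mirror_ok : is_cgwhq k G tH tmul tone tcop teps tS tpi.
Proof.
split.
- exact: m_mul_bilin.
- exact: m_mul1x.
- exact: m_mulx1.
- exact: m_cop_lin.
- exact: m_eps_lin.
- exact: m_S_lin.
- exact: m_coassoc.
- exact: m_counit_l.
- exact: m_counit_r.
- exact: m_cop_mul.
- exact: m_cop_one1.
- exact: m_cop_one2.
- exact: m_eps_mul1.
- exact: m_eps_mul2.
- exact: m_eps_mul3.
- exact: m_S_epst.
- exact: m_S_epss.
- exact: m_S_ax1.
- exact: m_S_ax2.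
- exact: m_S_ax3.
- exact: m_S_ax4.
- exact: m_pi_lin.
- exact: m_pi_mul.
- exact: m_pi_one.
- exact: m_pi_bij.
- exact: m_pi_cop.
- exact: m_pi_eps.
- exact: m_pi_comp.
Qed.

End Main.

Theorem proposition3p3 (k : fieldType) (G : grp) (H : G -> lmodType k)
  (mul : forall p, H p -> H p -> H p) (one : forall p, H p)
  (cop : forall p q : G, H (gmul p q) -> seq (H p * H q))
  (eps : H gunit -> k) (S : forall p : G, H p -> H (ginv p))
  (pi : forall p q : G, H q -> H (gconj p q)) :
  is_cgwhq k G H mul one cop eps S pi ->
  is_cgwhq k G (mirH k G H) (mir_mul k G H mul) (mir_one k G H one)
           (mir_cop k G H cop pi) (mir_eps k G H eps)
           (mir_S k G H S pi) (mir_pi k G H pi).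
Proof. exact: mirror_ok. Qed.
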